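(* Let $C\ge1$, $k>2$ an integer, $\rho\in(0,1)$ and $M$ a positive integer. Set $\varepsilon_i=\rho/2^{i-1}$ and $C_i=\|p_{\varepsilon_i}\|_1$ for $i=1,\dots,M$; $C_{-1}=1$, $C_0=\frac{2+\rho^k}{2-\rho^k}$, $C_{M+1}=C_*$. Set $\rho_i=\frac{2\beta_i^k}{1+\beta_i^{2k}}$ with $\beta_i=\frac{1-\sqrt{1-\frac{\rho+\varepsilon_i}{1+\varepsilon_i}}}{1+\sqrt{1-\frac{\rho+\varepsilon_i}{1+\varepsilon_i}}}$ for $i=1,\dots,M$; $\rho_{-1}=\rho^k$, $\rho_0=\frac{\rho^k}{2-\rho^k}$, $\rho_{M+1}=\rho_*$. Then $$\tilde\rho(C)\le\max_{i\in\{-1,0,\dots,M\}}\max\Big(\frac{C-C_i}{C_{i+1}-C_i}\rho_{i+1}+\frac{C_{i+1}-C}{C_{i+1}-C_i}\rho_i,\ \rho_*\Big).$$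
   Context: $\mathbb{R}_k[X]$ denotes real polynomials of degree at most $k$, and $\|p\|_1$ is the sum of absolute values of the coefficients of $p$. For $C\ge1$, $\tilde\rho(C)=\min\{\max_{x\in[0,\rho]}|p(x)| : p\in\mathbb{R}_k[X],\ p(1)=1,\ \|p\|_1\le C\}$. $T_k$ is the Chebyshev polynomial of the first kind of degree $k$. For $\varepsilon\ge0$, $p_\varepsilon(X)=T_k\big(2\frac{X+\varepsilon}{\rho+\varepsilon}-1\big)/\big|T_k\big(2\frac{1+\varepsilon}{\rho+\varepsilon}-1\big)\big|$ (the minimizer of $\max_{[-\varepsilon,\rho]}|p|$ over $p\in\mathbb{R}_k[X]$ with $p(1)=1$). $C_*=\|p_0\|_1$, and $\rho_*=\frac{2\beta^k}{1+\beta^{2k}}$ with $\beta=\frac{1-\sqrt{1-\rho}}{1+\sqrt{1-\rho}}$. *)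

(* Defs.v *)
From HB Require Import structures.
From mathcomp Require Import all_boot all_order all_algebra.
From mathcomp Require Import all_classical all_reals.
Set Implicit Arguments. Unset Strict Implicit. Unset Printing Implicit Defensive.
Import Order.TTheory GRing.Theory Num.Theory.
Local Open Scope classical_set_scope.
Local Open Scope ring_scope.

Section Defs.
Variable R : realType.

Fixpoint cheb (n : nat) : {poly R} :=
  match n with
  | 0%N => 1
  | 1%N => 'X
  | (m.+1 as n1).+1 => 2%:P * 'X * cheb n1 - cheb m
  end.

Definition norm1 (p : {poly R}) : R := \sum_(i < size p) `|p`_i|.

(* max_{x in [0,rho]} |p(x)| (attained, written as a sup) *)
Definition supnorm (rho : R) (p : {poly R}) : R :=
  sup [set y | exists2 x : R, 0 <= x <= rho & y = `|p.[x]|].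

(* rho~(C) = min { max_[0,rho] |p| : deg p <= k, p(1) = 1, ||p||_1 <= C }
   (the min is attained; written as an inf) *)
Definition rho_tilde (k : nat) (rho C : R) : R :=
  inf [set y | exists p : {poly R},
        [/\ (size p <= k.+1)%N, p.[1] = 1, norm1 p <= C & y = supnorm rho p]].

Definition p_eps (k : nat) (rho eps : R) : {poly R} :=
  `|(cheb k).[2 * (1 + eps) / (rho + eps) - 1]|^-1 *:
    (cheb k \Po ((2 / (rho + eps)) *: 'X + (2 * eps / (rho + eps) - 1)%:P)).

Definition C_star (k : nat) (rho : R) : R := norm1 (p_eps k rho 0).

Definition beta_of (r : R) : R := (1 - Num.sqrt (1 - r)) / (1 + Num.sqrt (1 - r)).

Definition rho_of_beta (k : nat) (b : R) : R := 2 * b ^+ k / (1 + b ^+ (2 * k)).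

Definition rho_star (k : nat) (rho : R) : R := rho_of_beta k (beta_of rho).

Definition eps_i (rho : R) (i : nat) : R := rho / 2 ^+ i.-1.

(* Sequences indexed by j = i + 1, j = 0 .. M+2, corresponding to i = -1 .. M+1 *)
Definition Cseq (k M : nat) (rho : R) (j : nat) : R :=
  if j == 0%N then 1
  else if j == 1%N then (2 + rho ^+ k) / (2 - rho ^+ k)
  else if (j <= M.+1)%N then norm1 (p_eps k rho (eps_i rho j.-1))
  else C_star k rho.

Definition rhoseq (k M : nat) (rho : R) (j : nat) : R :=
  if j == 0%N then rho ^+ k
  else if j == 1%N then rho ^+ k / (2 - rho ^+ k)
  else if (j <= M.+1)%N then
    rho_of_beta k (beta_of ((rho + eps_i rho j.-1) / (1 + eps_i rho j.-1)))
  else rho_star k rho.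

Definition interp_term (k M : nat) (rho C : R) (j : nat) : R :=
  (C - Cseq k M rho j) / (Cseq k M rho j.+1 - Cseq k M rho j) * rhoseq k M rho j.+1
  + (Cseq k M rho j.+1 - C) / (Cseq k M rho j.+1 - Cseq k M rho j) * rhoseq k M rho j.

Definition bound (k M : nat) (rho C : R) : R :=
  \big[Num.max/rho_star k rho]_(j < M.+2)
     Num.max (interp_term k M rho C j) (rho_star k rho).

End Defs.

(* Main.v *)
Require Import Defs.
From HB Require Import structures.
From mathcomp Require Import all_boot all_order all_algebra.
From mathcomp Require Import all_classical all_reals.
From mathcomp Require Import ring lra zify.
Import Order.TTheory GRing.Theory Num.Theory.
Local Open Scope ring_scope.

Lemma cheb_SS (R : realType) n : cheb R n.+2 = 2%:P * 'X * cheb R n.+1 - cheb R n.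
Proof. by []. Qed.

Lemma cheb_hornerSS (R : realType) n (t : R) :
  (cheb R n.+2).[t] = 2 * t * (cheb R n.+1).[t] - (cheb R n).[t].
Proof. by rewrite cheb_SS !hornerE. Qed.

Lemma cheb_size (R : realType) n : (size (cheb R n) <= n.+1)%N.
Proof.
have H : forall n, (size (cheb R n) <= n.+1)%N /\ (size (cheb R n.+1) <= n.+2)%N.
  elim=> [|m [H1 H2]]; first by rewrite /= size_poly1 size_polyX.
  split=> //; rewrite cheb_SS.
  apply: leq_trans (size_polyD _ _) _.
  rewrite size_polyN geq_max; apply/andP; split; last by apply: leq_trans H1 _; lia.
  apply: leq_trans (size_mul_leq _ _) _.
  have h : (size ((2%:P * 'X)%R : {poly R}) <= 2)%N.
    apply: leq_trans (size_mul_leq _ _) _.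
    have ar : forall a b : nat, (a <= 1 -> b = 2 -> (a + b).-1 <= 2)%N by move=> *; lia.
    apply: ar; [exact: size_polyC_leq1 | exact: size_polyX].
  have ar : forall a b : nat, (a <= 2 -> b <= m.+2 -> (a + b).-1 <= m.+3)%N by move=> *; lia.
  exact: ar h H2.
by case: (H n).
Qed.

Lemma cheb_z (R : realType) n (z : R) : z != 0 ->
  (cheb R n).[(z + z^-1)/2] = (z ^+ n + z^-1 ^+ n) / 2.
Proof.
move=> z0.
suff: forall n, (cheb R n).[(z + z^-1)/2] = (z ^+ n + z^-1 ^+ n) / 2 /\
   (cheb R n.+1).[(z + z^-1)/2] = (z ^+ n.+1 + z^-1 ^+ n.+1) / 2 by move=> /(_ n) [].
elim=> [|m [H1 H2]].
  by rewrite /= !hornerE !expr0 !expr1; split => //; field.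
split=> //; rewrite cheb_hornerSS H1 H2 !exprS; by field.
Qed.

Fixpoint tsq {R : realType} (t : R) (n : nat) : R * R :=
  match n with
  | 0%N => (1, 0)
  | m.+1 => (t * (tsq t m).1 + (t^+2 - 1) * (tsq t m).2, (tsq t m).1 + t * (tsq t m).2)
  end.

Lemma tsq_norm (R : realType) (t : R) n :
  (tsq t n).1 ^+ 2 - (t^+2 - 1) * (tsq t n).2 ^+ 2 = 1.
Proof.
elim: n => [|n IH] /=; first by ring.
apply: etrans IH; ring.
Qed.

Lemma tsq_cheb (R : realType) (t : R) n : (tsq t n).1 = (cheb R n).[t].
Proof.
suff: forall n, (tsq t n).1 = (cheb R n).[t] /\ (tsq t n.+1).1 = (cheb R n.+1).[t]
  by move=> /(_ n) [].
elim=> [|m [H1 H2]].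
  by rewrite /= !hornerE; split; ring.
split=> //; rewrite cheb_hornerSS -H1 -H2 /=; ring.
Qed.

Lemma cheb_bound (R : realType) n (t : R) : -1 <= t <= 1 -> `|(cheb R n).[t]| <= 1.
Proof.
move=> /andP[t1 t2].
rewrite -tsq_cheb.
have h := tsq_norm _ t n.
set T := (tsq t n).1 in h *; set S := (tsq t n).2 in h.
have h1 : 0 <= (1 - t^+2) * S^+2 by apply: mulr_ge0; [nra | exact: sqr_ge0].
have h2 : T ^+ 2 <= 1 by nra.
rewrite ler_norml; apply/andP; split; nra.
Qed.

Lemma gt0_neq0 (R : realType) (x : R) : 0 < x -> x != 0.
Proof. exact: lt0r_neq0. Qed.

Lemma peps_props (R : realType) (k : nat) (rho eps : R) :
  0 < rho < 1 -> 0 <= eps ->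
  [/\ (size (p_eps k rho eps) <= k.+1)%N, (p_eps k rho eps).[1] = 1 &
      forall x, 0 <= x <= rho -> `|(p_eps k rho eps).[x]| <=
         rho_of_beta k (beta_of ((rho + eps) / (1 + eps)))].
Proof.
move=> /andP[r0 r1] e0.
have re0 : 0 < rho + eps by lra.
have oe0 : 0 < 1 + eps by lra.
set r := (rho + eps) / (1 + eps).
have rpos : 0 < r by apply: divr_gt0.
have rlt1 : r < 1 by rewrite /r ltr_pdivrMr //; lra.
set s := Num.sqrt (1 - r).
have s2 : s ^+ 2 = 1 - r by rewrite sqr_sqrtr //; lra.
have s0 : 0 < s by rewrite sqrtr_gt0; lra.
have s1 : s < 1 by nra.
set b := beta_of r.
have bE : b = (1 - s) / (1 + s) by [].
have b0 : 0 < b by rewrite bE; apply: divr_gt0; lra.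
set y := 2 * (1 + eps) / (rho + eps) - 1.
have hy : y = (b + b^-1) / 2.
  rewrite bE invf_div.
  have -> : ((1 - s) / (1 + s) + (1 + s) / (1 - s)) / 2 = (1 + s^+2) / (1 - s^+2).
    by field; repeat (apply/andP; split); apply: gt0_neq0; nra.
  rewrite s2.
  have -> : 1 - (1 - r) = r by ring.
  have -> : 1 + (1 - r) = 2 - r by ring.
  rewrite /y /r; field.
  by apply/andP; split; apply: gt0_neq0; lra.
have Ty : (cheb R k).[y] = (b ^+ k + b^-1 ^+ k) / 2 by rewrite hy cheb_z // gt0_neq0.
have Typos : 0 < (cheb R k).[y].
  by rewrite Ty; apply: divr_gt0 => //; apply: addr_gt0; apply: exprn_gt0; rewrite ?invr_gt0.
have hc : `|(cheb R k).[y]|^-1 = rho_of_beta k b.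
  rewrite gtr0_norm // Ty /rho_of_beta exprVn mulnC exprM.
  have u0 : 0 < b ^+ k by apply: exprn_gt0.
  move: u0; set u := b ^+ k => u0.
  by field; repeat (apply/andP; split); apply: gt0_neq0; nra.
have hor : forall x, (p_eps k rho eps).[x] = `|(cheb R k).[y]|^-1 *
     (cheb R k).[2 * (x + eps) / (rho + eps) - 1].
  move=> x; rewrite /p_eps hornerZ horner_comp hornerD hornerZ hornerX hornerC /y.
  congr (_ * _); congr (horner _ _).
  by field; apply: gt0_neq0.
split.
- apply: leq_trans (size_scale_leq _ _) _.
  apply: leq_trans (size_comp_poly_leq _ _) _.
  have hL : (size ((2 / (rho + eps)) *: 'X + (2 * eps / (rho + eps) - 1)%:P : {poly R})%R <= 2)%N.
    apply: leq_trans (size_polyD _ _) _; rewrite geq_max; apply/andP; split.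
      by apply: leq_trans (size_scale_leq _ _) _; rewrite size_polyX.
    by apply: leq_trans (size_polyC_leq1 _) _.
  have hT := cheb_size R k.
  have ar : forall a1 b1 : nat, (a1 <= k.+1 -> b1 <= 2 -> (a1.-1 * b1.-1).+1 <= k.+1)%N.
    move=> a1 b1 ha hb; rewrite ltnS -[X in (_ <= X)%N]muln1; apply: leq_mul; lia.
  exact: ar hT hL.
- rewrite hor (_ : 2 * (1 + eps) / (rho + eps) - 1 = y) //.
  by rewrite gtr0_norm // mulVf // gt0_neq0.
- move=> x /andP[x0 xr]; rewrite hor -hc normrM.
  rewrite [X in X * _]ger0_norm ?invr_ge0 //.
  rewrite -[leRHS]mulr1; apply: ler_wpM2l; first by rewrite invr_ge0.
  apply: cheb_bound.
  have q0 : 0 <= 2 * (x + eps) / (rho + eps) by apply: divr_ge0; lra.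
  have q2 : 2 * (x + eps) / (rho + eps) <= 2 by rewrite ler_pdivrMr //; lra.
  apply/andP; split; lra.
Qed.

Lemma norm1_ext {R : realType} (p : {poly R}) n : (size p <= n)%N ->
  norm1 p = \sum_(i < n) `|p`_i|.
Proof.
move=> hn; rewrite /norm1 (big_ord_widen n (fun i => `|p`_i|) hn) big_mkcond /=.
apply: eq_bigr => i _; case: ifP => // /negbT; rewrite -leqNgt => h.
by rewrite nth_default // normr0.
Qed.

Lemma norm1D (R : realType) (p q : {poly R}) : norm1 (p + q) <= norm1 p + norm1 q.
Proof.
set n := maxn (size p) (size q).
rewrite (@norm1_ext _ (p + q) n (size_polyD p q)) (@norm1_ext _ p n) ?leq_maxl //
  (@norm1_ext _ q n) ?leq_maxr // -big_split /=.
by apply: ler_sum => i _; rewrite coefD ler_normD.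
Qed.

Lemma norm1Z (R : realType) (a : R) (p : {poly R}) : norm1 (a *: p) <= `|a| * norm1 p.
Proof.
rewrite (@norm1_ext _ (a *: p) (size p) (size_scale_leq a p)) /norm1 mulr_sumr.
by apply: ler_sum => i _; rewrite coefZ normrM.
Qed.

Lemma norm1N (R : realType) (p : {poly R}) : norm1 (- p) = norm1 p.
Proof.
rewrite (@norm1_ext _ (- p) (size p)) ?size_polyN //.
by apply: eq_bigr => i _; rewrite coefN normrN.
Qed.

Lemma norm1C (R : realType) (c : R) : norm1 (c%:P) <= `|c|.
Proof.
by rewrite (@norm1_ext _ c%:P 1 (size_polyC_leq1 c)) big_ord1 coefC.
Qed.

Lemma norm1Xn (R : realType) k : norm1 ('X^k : {poly R}) <= 1.
Proof.
rewrite /norm1 size_polyXn big_ord_recr /= coefXn eqxx normr1 big1 ?add0r //.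
by move=> i _; rewrite coefXn /= ltn_eqF // normr0.
Qed.

Lemma horner_le_norm1 (R : realType) (p : {poly R}) x : `|x| <= 1 -> `|p.[x]| <= norm1 p.
Proof.
move=> hx; rewrite horner_coef /norm1.
apply: le_trans (ler_norm_sum _ _ _) _.
apply: ler_sum => i _; rewrite normrM normrX.
rewrite -[leRHS]mulr1; apply: ler_wpM2l => //; exact: exprn_ile1.
Qed.

Lemma bigmax_ge (R : realType) n (G : nat -> R) x0 j : (j < n)%N ->
  G j <= \big[Num.max/x0]_(i < n) G i.
Proof.
elim: n G j => [|n IH] G j //; rewrite big_ord_recl le_max.
case: j => [|j] hj; first by rewrite lexx.
apply/orP; right.
have -> : \big[Num.max/x0]_(i < n) G (lift ord0 i) = \big[Num.max/x0]_(i < n) G i.+1.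
  by apply: eq_bigr => i _; rewrite lift0.
exact: (IH (fun i => G i.+1) j).
Qed.

Lemma find_j (R : realType) (f : nat -> R) (C : R) n : f 0%N <= C -> C < f n ->
  exists2 j, (j < n)%N & f j <= C < f j.+1.
Proof.
move=> h0; elim: n => [|n IH]; first by rewrite ltNge h0.
move=> hn; case: (ltP C (f n)) => h.
  by case: (IH h) => j jn hj; exists j => //; apply: ltnW.
by exists n => //; apply/andP.
Qed.

Lemma pow_le (R : realType) (x y : R) n : 0 <= x -> x <= y -> x ^+ n <= y ^+ n.
Proof.
move=> x0 xy; elim: n => [|n IH]; first by rewrite !expr0.
by rewrite !exprS; apply: ler_pM => //; apply: exprn_ge0.
Qed.

Definition Pj {R : realType} (k M : nat) (rho : R) (j : nat) : {poly R} :=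
  if j == 0%N then 'X^k
  else if j == 1%N then (2 - rho ^+ k)^-1 *: (2%:P * 'X^k - (rho ^+ k)%:P)
  else if (j <= M.+1)%N then p_eps k rho (eps_i rho j.-1)
  else p_eps k rho 0.

Lemma Pj_good {R : realType} k M {rho : R} j : 0 < rho < 1 ->
  [/\ (size (Pj k M rho j) <= k.+1)%N, (Pj k M rho j).[1] = 1,
      norm1 (Pj k M rho j) <= Cseq k M rho j &
      forall x, 0 <= x <= rho -> `|(Pj k M rho j).[x]| <= rhoseq k M rho j].
Proof.
move=> hr; have /andP[r0 r1] := hr.
have rk1 : rho ^+ k <= 1 by apply: exprn_ile1; lra.
have rk0 : 0 <= rho ^+ k by apply: exprn_ge0; lra.
rewrite /Pj /Cseq /rhoseq.
case: eqP => [_|j0].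
  split.
  - by rewrite size_polyXn.
  - by rewrite hornerXn expr1n.
  - exact: norm1Xn.
  - move=> x /andP[x0 xr]; rewrite hornerXn ger0_norm ?exprn_ge0 //; exact: pow_le.
case: eqP => [_|j1].
  have d0 : 0 < 2 - rho ^+ k by lra.
  have dinv : 0 <= (2 - rho ^+ k)^-1 by rewrite invr_ge0 ltW.
  split.
  - apply: leq_trans (size_scale_leq _ _) _.
    apply: leq_trans (size_polyD _ _) _; rewrite size_polyN geq_max; apply/andP; split.
      by rewrite mul_polyC; apply: leq_trans (size_scale_leq _ _) _; rewrite size_polyXn.
    by apply: leq_trans (size_polyC_leq1 _) _.
  - rewrite hornerZ hornerD hornerN hornerC mul_polyC hornerZ hornerXn expr1n.
    by field; apply: gt0_neq0.
  - apply: le_trans (norm1Z _ _ _) _.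
    rewrite ger0_norm // [X in _ <= X]mulrC.
    apply: ler_wpM2l => //.
    apply: le_trans (norm1D _ _ _) _; rewrite norm1N mul_polyC.
    apply: lerD; last by apply: le_trans (norm1C _ _) _; rewrite ger0_norm.
    apply: le_trans (norm1Z _ _ _) _; rewrite ger0_norm // -[leRHS]mulr1.
    apply: ler_wpM2l => //; exact: norm1Xn.
  - move=> x /andP[x0 xr].
    rewrite hornerZ hornerD hornerN hornerC mul_polyC hornerZ hornerXn.
    have h1 : x ^+ k <= rho ^+ k by apply: pow_le.
    have h2 : 0 <= x ^+ k by apply: exprn_ge0.
    rewrite normrM ger0_norm // [X in _ <= X]mulrC.
    apply: ler_wpM2l => //.
    rewrite ler_norml; apply/andP; split; lra.
case: ifP => jM.
  have e0 : 0 <= eps_i rho j.-1 by apply: divr_ge0; [lra | apply: exprn_ge0].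
  have [h1 h2 h3] := @peps_props _ k rho _ hr e0.
  by split; [exact: h1 | exact: h2 | exact: lexx | exact: h3].
have [h1 h2 h3] := @peps_props _ k rho 0 hr (lexx 0).
split; [exact: h1 | exact: h2 | exact: lexx |].
move=> x hx; have := h3 x hx; rewrite !addr0 divr1 //.
Qed.

Lemma Cseq_last (R : realType) k M (rho : R) : Cseq k M rho M.+2 = C_star k rho.
Proof. by rewrite /Cseq ltnn. Qed.

Lemma rhoseq_last (R : realType) k M (rho : R) : rhoseq k M rho M.+2 = rho_star k rho.
Proof. by rewrite /rhoseq ltnn. Qed.

Theorem proposition5 (R : realType) (C : R) (k : nat) (rho : R) (M : nat) :
  1 <= C -> (2 < k)%N -> 0 < rho < 1 -> (0 < M)%N ->
  rho_tilde k rho C <= bound k M rho C.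
Proof.
move=> C1 k2 hr M0; have /andP[r0 r1] := hr.
set rs := rho_star k rho.
have key : forall p : {poly R}, (size p <= k.+1)%N -> p.[1] = 1 -> norm1 p <= C ->
   forall b, (forall x, 0 <= x <= rho -> `|p.[x]| <= b) -> rho_tilde k rho C <= b.
  move=> p hs h1 hn b hb.
  apply: (@le_trans _ _ (supnorm rho p)).
    pose E := [set y : R | exists p0 : {poly R}, [/\ (size p0 <= k.+1)%N, p0.[1] = 1,
       norm1 p0 <= C & y = supnorm rho p0]]%classic.
    have hlb : has_lbound E.
      exists 0 => y [q [_ _ _ ->]].
      rewrite /supnorm.
      have hq : has_ubound [set y : R | exists2 x : R, 0 <= x <= rho & y = `|q.[x]|]%classic.
        exists (norm1 q) => z [x /andP[x0 xr] ->]; apply: horner_le_norm1.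
        rewrite ger0_norm; lra.
      apply: (@le_trans _ _ `|q.[0]|); first exact: normr_ge0.
      apply: (ub_le_sup hq).
      by exists 0 => //; apply/andP; split; lra.
    have := ge_inf hlb; move=> /(_ (supnorm rho p)); apply.
    by exists p; split.
  apply: ge_sup; first by exists `|p.[0]|, 0 => //; apply/andP; split; lra.
  by move=> y [x hx ->]; apply: hb.
have hbig : forall j, (j < M.+2)%N ->
    interp_term k M rho C j <= bound k M rho C /\ rs <= bound k M rho C.
  move=> j hj; rewrite /bound.
  have h := @bigmax_ge R M.+2 (fun j : nat => Num.max (interp_term k M rho C j) rs) rs j hj.
  by split; apply: le_trans h; rewrite le_max lexx ?orbT.
case: (leP (Cseq k M rho M.+2) C) => hC.
  have [h1 h2 h3 h4] := Pj_good k M (M.+2) hr.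
  apply: (key _ h1 h2 (le_trans h3 hC)) => x hx.
  apply: le_trans (h4 x hx) _.
  rewrite rhoseq_last.
  by case: (hbig 0%N isT).
have h0 : Cseq k M rho 0%N <= C by exact: C1.
have [j hj /andP[hCa hCb]] := @find_j R (Cseq k M rho) C M.+2 h0 hC.
have [a1 a2 a3 a4] := Pj_good k M j hr.
have [b1 b2 b3 b4] := Pj_good k M j.+1 hr.
set Ca := Cseq k M rho j in hCa hCb a3 *.
set Cb := Cseq k M rho j.+1 in hCa hCb b3 *.
have D0 : 0 < Cb - Ca by lra.
set l := (C - Ca) / (Cb - Ca).
have l0 : 0 <= l by apply: divr_ge0; lra.
have l1 : l <= 1 by rewrite /l ler_pdivrMr //; lra.
have l1' : 0 <= 1 - l by rewrite subr_ge0.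
apply: (key (l *: Pj k M rho j.+1 + (1 - l) *: Pj k M rho j)).
- apply: leq_trans (size_polyD _ _) _; rewrite geq_max; apply/andP; split;
  apply: leq_trans (size_scale_leq _ _) _ => //.
- rewrite hornerD !hornerZ a2 b2; ring.
- apply: le_trans (norm1D _ _ _) _.
  apply: le_trans (lerD (norm1Z _ _ _) (norm1Z _ _ _)) _.
  rewrite !ger0_norm //.
  apply: le_trans (lerD (ler_wpM2l l0 b3) (ler_wpM2l l1' a3)) _.
  have -> : l * Cb + (1 - l) * Ca = C by rewrite /l; field; apply: gt0_neq0.
  exact: lexx.
- move=> x hx.
  rewrite hornerD !hornerZ.
  apply: le_trans (ler_normD _ _) _.
  have nl : forall (c a : R), 0 <= c -> `|c * a| = c * `|a|.
    by move=> c a c0; rewrite normrM ger0_norm.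
  rewrite (nl _ _ l0) (nl _ _ l1').
  apply: le_trans (lerD (ler_wpM2l l0 (b4 x hx)) (ler_wpM2l l1' (a4 x hx))) _.
  have -> : l * rhoseq k M rho j.+1 + (1 - l) * rhoseq k M rho j = interp_term k M rho C j.
    by rewrite /interp_term -/Ca -/Cb /l; field; apply: gt0_neq0.
  by case: (hbig j hj).
Qed.
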